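(* There is a primitive recursive function $\bar h:\mathbb{N}^3\to\mathbb{N}$ such that for all integers $n\ge1$, $k$, all finite nonempty $X\subseteq\mathbb{N}$, all families $(T_\rho:\rho\in 2^{\min X})$ and all $C$ satisfying (a) $|X|\ge\bar h(\min X,n,k)$, (b) each $T_\rho$ is an $X$-quasistrong tree all of whose elements are compatible with $\rho$, (c) $C:\bigcup_\rho T_\rho\to k$ is a coloring, there exist $Z\subseteq X$ with $|Z|=n$ and trees $S_\rho\subseteq T_\rho$ ($\rho\in 2^{\min X}$) such that (i) $\min Z=\min X$, and (ii) each $S_\rho$ is $Z$-quasistrong and $(C,Z)$-prehomogeneous.
   Context: Strings are finite binary strings with $\preceq$ the initial-segment order; two strings are compatible if one is an initial segment of the other; $2^i$ also denotes the set of strings of length $i$; a tree is a set of strings closed under initial segments. For finite $X=\{x_0<\dots<x_n\}$, a finite tree $T$ is $X$-quasistrong if $T\cap 2^{x_i}\ne\emptyset$ for all $i\le n$ and for each $i<n$ every $\sigma\in T\cap2^{x_i}$ has exactly two incompatible extensions in $T\cap 2^{x_{i+1}}$. A tree $T$ is $(C,X)$-prehomogeneous if there is a color $c$ such that for every $i<n$, $\sigma\in T\cap 2^{x_i}$ and $\tau\in T\cap 2^{x_{i+1}}$ with $\sigma\prec\tau$, there is $\zeta\in T$ with $\sigma\preceq\zeta\preceq\tau$ and $C(\zeta)=c$. *)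

(* Defs.v *)
From mathcomp Require Import all_boot.
Set Implicit Arguments. Unset Strict Implicit. Unset Printing Implicit Defensive.

(** * Primitive recursive functions.
    [PRfun n f] : the restriction of [f : seq nat -> nat] to lists of
    length [n] (i.e. to N^n) is primitive recursive. *)

Fixpoint primrec (f g : seq nat -> nat) (x : nat) (v : seq nat) : nat :=
  match x with
  | 0 => f v
  | y.+1 => g (y :: primrec f g y v :: v)
  end.

Fixpoint inseq {A : Type} (a : A) (l : seq A) : Prop :=
  match l with [::] => False | b :: l' => b = a \/ inseq a l' end.

Inductive PRfun : nat -> (seq nat -> nat) -> Prop :=
| PR_zero n : PRfun n (fun _ => 0)
| PR_succ : PRfun 1 (fun v => (nth 0 v 0).+1)
| PR_proj n i : i < n -> PRfun n (fun v => nth 0 v i)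
| PR_comp n m (g : seq nat -> nat) (fs : seq (seq nat -> nat)) :
    size fs = m -> PRfun m g -> (forall f, inseq f fs -> PRfun n f) ->
    PRfun n (fun v => g (map (fun f => f v) fs))
| PR_rec n f g : PRfun n f -> PRfun n.+2 g ->
    PRfun n.+1 (fun w => primrec f g (head 0 w) (behead w))
| PR_ext n f g : PRfun n f -> (forall v, size v = n -> f v = g v) -> PRfun n g.

Definition primitive_recursive3 (h : nat -> nat -> nat -> nat) : Prop :=
  PRfun 3 (fun v => h (nth 0 v 0) (nth 0 v 1) (nth 0 v 2)).

(* strings are [seq bool]; the initial-segment order is [prefix];
   a (finite) set of strings is represented by a list [T : seq (seq bool)]
   with membership [\in]. *)

Definition compatible (s t : seq bool) : bool := prefix s t || prefix t s.

Definition is_tree (T : seq (seq bool)) : Prop :=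
  forall s t, t \in T -> prefix s t -> s \in T.

(** Finite X ⊆ ℕ is represented by a strictly increasing list [X]
    = [x_0 < ... < x_n]; x_i = nth 0 X i. *)
Definition finset_nat (X : seq nat) : Prop := sorted ltn X.

Definition exts (T : seq (seq bool)) (sigma : seq bool) (l : nat) :=
  undup [seq tau <- T | (size tau == l) && prefix sigma tau].

Definition quasistrong (X : seq nat) (T : seq (seq bool)) : Prop :=
  is_tree T /\
  (forall i, i < size X -> exists s, s \in T /\ size s = nth 0 X i) /\
  (forall i, i.+1 < size X -> forall sigma, sigma \in T ->
     size sigma = nth 0 X i ->
     size (exts T sigma (nth 0 X i.+1)) = 2 /\
     (forall t1 t2, t1 \in exts T sigma (nth 0 X i.+1) ->
        t2 \in exts T sigma (nth 0 X i.+1) -> t1 != t2 -> ~~ compatible t1 t2)).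

Definition prehomogeneous (C : seq bool -> nat) (X : seq nat)
    (T : seq (seq bool)) : Prop :=
  exists c : nat,
  forall i, i.+1 < size X -> forall sigma tau,
    sigma \in T -> size sigma = nth 0 X i ->
    tau \in T -> size tau = nth 0 X i.+1 -> prefix sigma tau ->
    exists zeta, [/\ zeta \in T, prefix sigma zeta, prefix zeta tau & C zeta = c].

(* Main.v *)
Require Import Defs.
From mathcomp Require Import all_boot zify.
From Stdlib Require Import Classical IndefiniteDescription.
Set Implicit Arguments. Unset Strict Implicit.

Definition gfun k m := iter k (fun d => m * d + 1) 2.
Definition Gfun r m k := iter r (gfun k) m.
Definition hbar x0 n k := Gfun (2 ^ x0) n k.

Lemma PR_comp1 n g f : PRfun 1 g -> PRfun n f -> PRfun n (fun v => g [:: f v]).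
Proof.
move=> Hg Hf; apply: (PR_ext (PR_comp (fs := [:: f]) (n:=n) erefl Hg _)) => //.
by move=> f' [<-|[]].
Qed.

Lemma PR_comp2 n g f1 f2 : PRfun 2 g -> PRfun n f1 -> PRfun n f2 ->
  PRfun n (fun v => g [:: f1 v; f2 v]).
Proof.
move=> Hg H1 H2; apply: (PR_ext (PR_comp (fs := [:: f1; f2]) (n:=n) erefl Hg _)) => //.
by move=> f' [<-|[<-|[]]].
Qed.

Lemma PR_comp3 n g f1 f2 f3 : PRfun 3 g -> PRfun n f1 -> PRfun n f2 -> PRfun n f3 ->
  PRfun n (fun v => g [:: f1 v; f2 v; f3 v]).
Proof.
move=> Hg H1 H2 H3; apply: (PR_ext (PR_comp (fs := [:: f1; f2; f3]) (n:=n) erefl Hg _)) => //.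
by move=> f' [<-|[<-|[<-|[]]]].
Qed.

Lemma PR_const n c : PRfun n (fun _ => c).
Proof.
elim: c => [|c IH]; first exact: PR_zero.
exact: (PR_ext (PR_comp1 PR_succ IH)).
Qed.

Lemma PR_add : PRfun 2 (fun v => nth 0 v 0 + nth 0 v 1).
Proof.
have Hg : PRfun 3 (fun u => (nth 0 u 1).+1).
  exact: (PR_ext (PR_comp1 PR_succ (PR_proj (n:=3) (i:=1) erefl))).
apply: (PR_ext (PR_rec (PR_proj (n:=1) (i:=0) erefl) Hg)).
case=> [|a [|b [|]]] //= _.
by elim: a => //= a ->.
Qed.

Lemma PR_mul : PRfun 2 (fun v => nth 0 v 0 * nth 0 v 1).
Proof.
have Hg : PRfun 3 (fun u => nth 0 u 1 + nth 0 u 2).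
  exact: (PR_ext (PR_comp2 PR_add (PR_proj (n:=3) (i:=1) erefl) (PR_proj (n:=3) (i:=2) erefl))).
apply: (PR_ext (PR_rec (PR_const 1 0) Hg)).
case=> [|a [|b [|]]] //= _.
elim: a => //= a ->; by rewrite mulSn addnC.
Qed.

Lemma PR_gfun : PRfun 2 (fun v => gfun (nth 0 v 0) (nth 0 v 1)).
Proof.
have Hg : PRfun 3 (fun u => (nth 0 u 2 * nth 0 u 1).+1).
  apply: (PR_ext (PR_comp1 PR_succ (PR_comp2 PR_mul (PR_proj (n:=3) (i:=2) erefl) (PR_proj (n:=3) (i:=1) erefl)))) => v _ /=.
  done.
apply: (PR_ext (PR_rec (PR_const 1 2) Hg)).
case=> [|a [|b [|]]] //= _.
by rewrite /gfun; elim: a => //= a ->; rewrite addn1.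
Qed.

Lemma PR_Gfun : PRfun 3 (fun v => Gfun (nth 0 v 0) (nth 0 v 1) (nth 0 v 2)).
Proof.
have Hg : PRfun 4 (fun u => gfun (nth 0 u 3) (nth 0 u 1)).
  exact: (PR_ext (PR_comp2 PR_gfun (PR_proj (n:=4) (i:=3) erefl) (PR_proj (n:=4) (i:=1) erefl))).
apply: (PR_ext (PR_rec (PR_proj (n:=2) (i:=0) erefl) Hg)).
case=> [|a [|b [|c [|]]]] //= _.
by rewrite /Gfun; elim: a => //= a ->.
Qed.

Lemma PR_exp2 : PRfun 1 (fun v => 2 ^ nth 0 v 0).
Proof.
have Hg : PRfun 2 (fun u => nth 0 u 1 + nth 0 u 1).
  exact: (PR_ext (PR_comp2 PR_add (PR_proj (n:=2) (i:=1) erefl) (PR_proj (n:=2) (i:=1) erefl))).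
apply: (PR_ext (PR_rec (PR_const 0 1) Hg)).
case=> [|a [|]] //= _.
by elim: a => //= a ->; rewrite expnS mul2n addnn.
Qed.

Lemma PR_hbar : primitive_recursive3 hbar.
Proof.
rewrite /primitive_recursive3.
apply: (PR_ext (PR_comp3 PR_Gfun (PR_comp1 PR_exp2 (PR_proj (n:=3) (i:=0) erefl))
   (PR_proj (n:=3) (i:=1) erefl) (PR_proj (n:=3) (i:=2) erefl))).
done.
Qed.

Lemma prefix_le (a b t : seq bool) : prefix a t -> prefix b t -> size a <= size b -> prefix a b.
Proof.
rewrite !prefixE => /eqP Ha /eqP Hb Hs.
by rewrite -Hb take_takel // Ha.
Qed.

Lemma prefix_eqsize (a b : seq bool) : prefix a b -> size a = size b -> a = b.
Proof. by rewrite prefixE => /eqP E Hs; rewrite -E Hs take_size. Qed.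

Lemma prefix_same (a b t : seq bool) : prefix a t -> prefix b t -> size a = size b -> a = b.
Proof. move=> Ha Hb Hs; have H := prefix_le Ha Hb (eq_leq Hs); exact: prefix_eqsize H Hs. Qed.

Lemma ext_neq (a b a' b' : seq bool) : prefix a a' -> prefix b b' -> size a = size b ->
  a != b -> a' != b'.
Proof.
move=> Ha Hb Hs; apply: contra => /eqP E; subst b'.
by apply/eqP; apply: prefix_same Ha Hb Hs.
Qed.

Lemma pathE (x : nat) s : path ltn x s = all (ltn x) s && sorted ltn s.
Proof. by rewrite path_sortedE //; exact: ltn_trans. Qed.

Lemma path_lower (x y : nat) s : x <= y -> path ltn y s -> path ltn x s.
Proof. case: s => //= a s Hxy /andP[Hya ->]; rewrite andbT; exact: leq_ltn_trans Hxy Hya. Qed.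

Lemma path_drop1 (x y : nat) s : path ltn x (y :: s) -> path ltn x s.
Proof. move=> /= /andP[Hxy]; apply: path_lower; exact: ltnW. Qed.

Lemma path_notin (x : nat) s : path ltn x s -> x \notin s.
Proof. rewrite pathE => /andP[/allP H _]; apply/negP => /H; by rewrite /= ltnn. Qed.

Lemma path_gt (x y : nat) s : path ltn x s -> y \in s -> x < y.
Proof. by rewrite pathE => /andP[/allP H _] /H. Qed.

Section Tree.
Variable T : seq (seq bool).
Variable C : seq bool -> nat.

Definition Spl (X : seq nat) := forall l1 l2, l1 \in X -> l2 \in X -> l1 < l2 ->
  forall sigma, sigma \in T -> size sigma = l1 -> exists tau1 tau2,
  [/\ tau1 \in T, tau2 \in T, prefix sigma tau1, prefix sigma tau2 &
      [/\ size tau1 = l2, size tau2 = l2 & tau1 != tau2]].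

Lemma Spl_sub X Y : {subset Y <= X} -> Spl X -> Spl Y.
Proof. move=> sub H l1 l2 H1 H2; apply: H; exact: sub. Qed.

Lemma Spl_chain X l1 l2 sigma : Spl X -> l1 \in X -> l2 \in X -> l1 <= l2 ->
  sigma \in T -> size sigma = l1 -> exists tau, [/\ tau \in T, prefix sigma tau & size tau = l2].
Proof.
move=> H H1 H2; rewrite leq_eqVlt => /orP[/eqP E|lt] Hs Hz.
  by exists sigma; rewrite prefix_refl -E.
by have [t1 [t2 [? ? ? ? [? ? ?]]]] := H _ _ H1 H2 lt _ Hs Hz; exists t1.
Qed.

Definition edge c sigma tau (z : nat) :=
  [/\ tau \in T, size tau = z, prefix sigma tau &
     exists zeta, [/\ prefix sigma zeta, size sigma < size zeta, prefix zeta tau & C zeta = c]].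

Fixpoint Good c (Z : seq nat) sigma {struct Z} : Prop :=
  match Z with
  | [::] => True
  | z :: Z' => exists tau1 tau2, [/\ tau1 != tau2, edge c sigma tau1 z, edge c sigma tau2 z,
        Good c Z' tau1 & Good c Z' tau2]
  end.

Lemma edge_reroot c u v tau z : prefix u v -> edge c v tau z -> edge c u tau z.
Proof.
move=> Huv [H1 H2 H3 [zeta [Z1 Z2 Z3 Z4]]]; split => //; first exact: prefix_trans H3.
exists zeta; split => //; first exact: prefix_trans Z1.
exact: leq_ltn_trans (size_prefix Huv) Z2.
Qed.

Lemma Good_reroot c Z u v : prefix u v -> Good c Z v -> Good c Z u.
Proof.
case: Z => //= z Z Huv [t1 [t2 [N E1 E2 G1 G2]]].
exists t1, t2; split => //; exact: edge_reroot Huv _.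
Qed.

Lemma edge_trans c sigma tau rho z z' : edge c sigma tau z -> rho \in T -> size rho = z' ->
  prefix tau rho -> edge c sigma rho z'.
Proof.
move=> [H1 H2 H3 [zeta [Z1 Z2 Z3 Z4]]] R1 R2 R3; split => //; first exact: prefix_trans R3.
exists zeta; split => //; exact: prefix_trans R3.
Qed.

Lemma Good_drop c z z2 Z sigma : Good c [:: z, z2 & Z] sigma -> Good c (z2 :: Z) sigma.
Proof.
move=> [t1 [t2 [N E1 E2 [r1 [_ [_ F1 _ G1 _]]] [r2 [_ [_ F2 _ G2 _]]]]]].
exists r1, r2; split => //.
- case: F1 => _ _ P1 _; case: F2 => _ _ P2 _.
  apply: ext_neq P1 P2 _ N; by case: E1 => _ ->; case: E2 => _ ->.
- by case: F1 => A B P _; apply: edge_trans E1 A B P.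
- by case: F2 => A B P _; apply: edge_trans E2 A B P.
Qed.

Lemma Good_thin c Z1 : forall Z2 sigma, path ltn (size sigma) Z1 -> path ltn (size sigma) Z2 ->
  {subset Z2 <= Z1} -> Good c Z1 sigma -> Good c Z2 sigma.
Proof.
elim: Z1 => [|z Z1 IH] [|y Z2] sigma //=.
- by move=> _ _ /(_ y); rewrite inE eqxx => /(_ isT).
move=> /andP[Hsz P1] /andP[Hsy P2] sub G.
have [Eyz|Nyz] := eqVneq y z.
  subst y; case: G => t1 [t2 [N E1 E2 G1 G2]]; exists t1, t2; split => //.
  - apply: IH => //; first by case: E1 => _ ->.
    + by case: E1 => _ ->.
    move=> x Hx; have := sub x; rewrite !inE Hx orbT => /(_ isT) /orP[/eqP Ex|//].
    by subst x; move: (path_notin P2); rewrite Hx.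
  - apply: IH => //; first by case: E2 => _ ->.
    + by case: E2 => _ ->.
    move=> x Hx; have := sub x; rewrite !inE Hx orbT => /(_ isT) /orP[/eqP Ex|//].
    by subst x; move: (path_notin P2); rewrite Hx.
have Hy : y \in Z1 by have := sub y; rewrite !inE eqxx /= (negbTE Nyz) => /(_ isT).
have Hzy : z < y by exact: path_gt P1 Hy.
case: Z1 IH P1 sub G Hy Hzy => // z2 Z1 IH P1 sub G Hy Hzy.
have G' := Good_drop G.
apply: (IH (y :: Z2)) => //=.
all: try (by rewrite Hsy).
all: try (by move: P1 => /= /andP[H1 H2]; rewrite (ltn_trans Hsz H1) H2).
move=> x Hx; have := sub x Hx; rewrite inE => /orP[/eqP Ex|//].
subst x; move: Hx; rewrite inE => /orP[/eqP E|Hx]; first by move: Hzy; rewrite E ltnn.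
by move: (ltn_trans Hzy (path_gt P2 Hx)); rewrite ltnn.
Qed.

End Tree.

Lemma sorted_nth_lt (X : seq nat) i j : sorted ltn X -> i < j -> j < size X -> nth 0 X i < nth 0 X j.
Proof.
move=> HX Hij Hj; apply: (sorted_ltn_nth ltn_trans 0 HX) => //; rewrite inE //.
exact: ltn_trans Hij Hj.
Qed.

Lemma sorted_nth_le (X : seq nat) i j : sorted ltn X -> i <= j -> j < size X -> nth 0 X i <= nth 0 X j.
Proof.
move=> HX; rewrite leq_eqVlt => /orP[/eqP->//|Hij] Hj.
exact: ltnW (sorted_nth_lt HX Hij Hj).
Qed.

Lemma gfun_pos k m : 0 < gfun k m.
Proof. by case: k => [|k] //=; rewrite addn1. Qed.

Lemma gfunS k m : gfun k.+1 m = m * gfun k m + 1.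
Proof. by []. Qed.

Fixpoint lv (X : seq nat) d i j := match j with 0 => [::] | j'.+1 => nth 0 X (i + d) :: lv X d (i + d) j' end.

Lemma lvS X d i j : lv X d i j.+1 = nth 0 X (i + d) :: lv X d (i + d) j.
Proof. by []. Qed.

Lemma lv_props X d (HX : sorted ltn X) (Hd : 0 < d) j : forall i, i + j * d < size X ->
  [/\ path ltn (nth 0 X i) (lv X d i j), {subset lv X d i j <= X} & size (lv X d i j) = j].
Proof.
elim: j => [|j IH] i Hi; first by split.
rewrite mulSn in Hi.
have [P S E] : [/\ path ltn (nth 0 X (i+d)) (lv X d (i+d) j), {subset lv X d (i+d) j <= X} & size (lv X d (i+d) j) = j].
  by apply: IH; lia.
rewrite lvS; split.
- rewrite /= P andbT; apply: sorted_nth_lt => //; lia.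
- move=> x; rewrite inE => /orP[/eqP->|/S//]; have H : i + d < size X by lia.
  exact: mem_nth H.
- by rewrite /= E.
Qed.

Lemma core (T : seq (seq bool)) (C : seq bool -> nat) k : forall m X u, sorted ltn X -> head 0 X = size u -> u \in T -> Spl T X ->
  gfun k m <= size X ->
  (forall tau zeta, tau \in T -> prefix u tau -> size tau = nth 0 X (size X).-1 ->
     prefix zeta tau -> size u < size zeta -> C zeta < k) ->
  exists c Z', [/\ path ltn (size u) Z', {subset Z' <= X}, size Z' = m & Good T C c Z' u].
Proof.
elim: k => [|k IHk] [|m] X u HX Hh Hu HS Hg HC; try by exists 0, [::].
-
  exfalso.
  have Hg1 : 1 < size X by [].
  have Hg0 : 0 < size X by apply: ltnW.
  have H01 : nth 0 X 0 < nth 0 X 1 by apply: sorted_nth_lt.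
  have Hx0 : size u = nth 0 X 0 by case: X Hh {HX HS Hg HC H01 Hg1 Hg0}.
  have [t1 [t2 [T1 _ P1 _ [S1 _ _]]]] := HS _ _ (mem_nth 0 Hg0) (mem_nth 0 Hg1) H01 u Hu Hx0.
  have Hlast : (size X).-1 < size X by rewrite prednK.
  have Hle1 : 1 <= (size X).-1 by lia.
  have [t' [T' P' S']] := Spl_chain HS (mem_nth 0 Hg1) (mem_nth 0 Hlast)
     (sorted_nth_le HX Hle1 Hlast) T1 S1.
  have := HC t' t1 T' (prefix_trans P1 P') S' P'.
  by rewrite Hx0 S1 H01 => /(_ isT).
-
  have Hd : 0 < gfun k m.+1 := gfun_pos k m.+1.
  rewrite gfunS mulSn in Hg.
  remember (gfun k m.+1) as d eqn:Hdd.
  have Hg' : d + m * d + 1 <= size X by [].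
  have Hx0 : size u = nth 0 X 0 by case: X Hh {HX HS Hg HC Hg'}.
  pose good a v := exists tau zeta, [/\ tau \in T, prefix v tau, size tau = nth 0 X (a + d.-1),
       prefix v zeta & [/\ size v < size zeta, prefix zeta tau & C zeta = k]].
  case: (classic (exists a v, [/\ a <= m * d + 1, v \in T, prefix u v, size v = nth 0 X a & ~ good a v])).
  + move=> [a [v [Ha Hv Huv Hsv Hng]]].
    set Xs := take d (drop a X).
    have Had : a + d <= size X by lia.
    have Hsz : size Xs = d by rewrite size_takel // size_drop leq_subRL // ?addnC //; lia.
    have HXs : sorted ltn Xs by apply/take_sorted/drop_sorted.
    have Hsub : {subset Xs <= X} by move=> x /mem_take /mem_drop.
    have Hhs : head 0 Xs = size v by rewrite -nth0 nth_take // nth_drop addn0 Hsv.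
    have Hcol : forall tau zeta, tau \in T -> prefix v tau -> size tau = nth 0 Xs (size Xs).-1 ->
        prefix zeta tau -> size v < size zeta -> C zeta < k.
      move=> tau zeta Ht Pvt Hst Pzt Hsz'.
      rewrite Hsz nth_take ?prednK // nth_drop in Hst.
      have Hl1 : a + d.-1 < size X by lia.
      have Hlast : (size X).-1 < size X by lia.
      have Hle : a + d.-1 <= (size X).-1 by lia.
      have [t' [T' P' S']] := Spl_chain HS (mem_nth 0 Hl1) (mem_nth 0 Hlast) (sorted_nth_le HX Hle Hlast) Ht Hst.
      have H1 := HC t' zeta T' (prefix_trans (prefix_trans Huv Pvt) P') S' (prefix_trans Pzt P')
                   (leq_ltn_trans (size_prefix Huv) Hsz').
      have H2 : C zeta != k.
        apply/eqP => Ec; apply: Hng; exists tau, zeta; split => //; exact: prefix_le Pvt Pzt (ltnW Hsz').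
      by rewrite ltn_neqAle H2 -ltnS.
    have [c [Z' [P S E G]]] := IHk m.+1 Xs v HXs Hhs Hv (Spl_sub Hsub HS) (eq_leq (etrans (esym Hdd) (esym Hsz))) Hcol.
    exists c, Z'; split => //.
    * exact: path_lower (size_prefix Huv) P.
    * by move=> x /S /Hsub.
    * exact: Good_reroot Huv G.
  + move=> Hno.
    have Hall : forall a v, a <= m * d + 1 -> v \in T -> prefix u v -> size v = nth 0 X a -> good a v.
      move=> a v Ha Hv Huv Hsv; apply: NNPP => Hng; apply: Hno; exists a, v; split => //.
    have build : forall j i v, i + j * d <= d + m * d -> v \in T -> prefix u v -> size v = nth 0 X i ->
        Good T C k (lv X d i j) v.
      elim=> [|j IH] i v Hij Hv Huv Hsv; first by [].
      rewrite mulSn in Hij.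
      rewrite lvS.
      have Hi1 : i.+1 < size X by lia.
      have Hlt : nth 0 X i < nth 0 X i.+1 by apply: sorted_nth_lt.
      have [w1 [w2 [W1 W2 P1 P2 [S1 S2 N]]]] := HS _ _ (mem_nth 0 (ltnW Hi1)) (mem_nth 0 Hi1) Hlt v Hv Hsv.
      have Ha : i.+1 <= m * d + 1 by lia.
      have [t1 [z1 [T1 Q1 St1 R1 [Z1 Y1 C1]]]] := Hall _ _ Ha W1 (prefix_trans Huv P1) S1.
      have [t2 [z2 [T2 Q2 St2 R2 [Z2 Y2 C2]]]] := Hall _ _ Ha W2 (prefix_trans Huv P2) S2.
      have E : i.+1 + d.-1 = i + d by rewrite addSn -addnS prednK.
      rewrite E in St1 St2.
      have Hvz1 : size v < size z1 by apply: ltn_trans Z1; rewrite S1 Hsv.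
      have Hvz2 : size v < size z2 by apply: ltn_trans Z2; rewrite S2 Hsv.
      exists t1, t2; split.
      * apply: ext_neq Q1 Q2 _ N; by rewrite S1 S2.
      * split => //; first exact: prefix_trans P1 Q1.
        exists z1; split => //; exact: prefix_trans P1 R1.
      * split => //; first exact: prefix_trans P2 Q2.
        exists z2; split => //; exact: prefix_trans P2 R2.
      * apply: IH => //; [clear -Hij; lia | exact: prefix_trans (prefix_trans Huv P1) Q1].
      * apply: IH => //; [clear -Hij; lia | exact: prefix_trans (prefix_trans Huv P2) Q2].
    have Hlv : 0 + m.+1 * d < size X by rewrite mulSn add0n -addn1.
    have [P S E] := lv_props HX Hd Hlv.
    exists k, (lv X d 0 m.+1); split => //; first by rewrite Hx0.
    apply: build; rewrite ?mulSn ?add0n ?prefix_refl //.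
Qed.

Lemma multi (T : seq bool -> seq (seq bool)) (C : seq bool -> nat) k :
  forall (R : seq (seq bool)) m X, sorted ltn X -> 0 < size X ->
  Gfun (size R) m.+1 k <= size X ->
  (forall rho, rho \in R -> [/\ rho \in T rho, size rho = head 0 X, Spl (T rho) X,
       is_tree (T rho) & forall s, s \in T rho -> C s < k]) ->
  exists Z', [/\ path ltn (head 0 X) Z', {subset Z' <= X}, size Z' = m &
     forall rho, rho \in R -> exists c, Good (T rho) C c Z' rho].
Proof.
elim=> [|rho R IH] m X HX Hpos Hg Hrho.
  case: X HX Hpos Hg {Hrho} => [|x0 X'] // HX _ Hg.
  exists (take m X'); split => //.
  - by have := take_sorted m.+1 HX.
  - by move=> x /mem_take Hx; rewrite inE Hx orbT.
  - by rewrite size_takel.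
have [Hr1 Hr2 Hr3 Hr4 Hr5] := Hrho rho (mem_head _ _).
set N := Gfun (size R) m.+1 k.
have Hg' : gfun k N <= size X by [].
have Hcol : forall tau zeta, tau \in T rho -> prefix rho tau -> size tau = nth 0 X (size X).-1 ->
     prefix zeta tau -> size rho < size zeta -> C zeta < k.
  move=> tau zeta Ht _ _ Pz _; apply: Hr5; exact: Hr4 Pz.
have [c1 [Z1 [P1 S1 E1 G1]]] := core HX (esym Hr2) Hr1 Hr3 Hg' Hcol.
have Hx0 : head 0 X \in X by case: X HX Hpos {Hg Hrho Hr2 Hr3 Hcol S1 Hg' P1} => //= x0 X' _ _; rewrite mem_head.
set X1 := head 0 X :: Z1.
have HX1sub : {subset X1 <= X} by move=> x; rewrite inE => /orP[/eqP->//|/S1].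
have [Z' [P S E G]] : exists Z', [/\ path ltn (head 0 X1) Z', {subset Z' <= X1}, size Z' = m &
     forall rho, rho \in R -> exists c, Good (T rho) C c Z' rho].
  apply: IH => //.
  - by rewrite /X1 /= -Hr2.
  - by rewrite /X1 /= E1 leqnSn.
  - move=> r Hr; have [A1 A2 A3 A4 A5] := Hrho r (ltac:(by rewrite inE Hr orbT)); split => //.
    exact: Spl_sub HX1sub A3.
exists Z'; split => //.
- by move=> x /S /HX1sub.
- move=> r; rewrite inE => /orP[/eqP->|Hr]; last exact: G.
  exists c1; apply: Good_thin G1 => //.
  + by rewrite Hr2.
  + move=> x Hx; have := S x Hx; rewrite inE => /orP[/eqP Ex|//].
    by move: (path_notin P); rewrite /= -Ex Hx.
Qed.

Definition inS (Lf : seq (seq bool)) s := has (prefix s) Lf.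

Lemma inS_cat L1 L2 s : inS (L1 ++ L2) s = inS L1 s || inS L2 s.
Proof. by rewrite /inS has_cat. Qed.

Lemma inS_down Lf s t : inS Lf t -> prefix s t -> inS Lf s.
Proof. move=> /hasP[x Hx Ptx] Pst; apply/hasP; exists x => //; exact: prefix_trans Ptx. Qed.

Section Fin.
Variable T : seq (seq bool).
Variable C : seq bool -> nat.
Variable c : nat.

Fixpoint Q (Z : seq nat) sigma (Lf : seq (seq bool)) {struct Z} : Prop :=
  match Z with
  | [::] => Lf = [:: sigma]
  | z :: Z' => exists tau1 tau2 L1 L2, [/\ tau1 != tau2, edge T C c sigma tau1 z,
       edge T C c sigma tau2 z, Q Z' tau1 L1 & Q Z' tau2 L2 /\ Lf = L1 ++ L2]
  end.

Lemma Good_Q Z : forall sigma, Good T C c Z sigma -> exists Lf, Q Z sigma Lf.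
Proof.
elim: Z => [|z Z IH] sigma /=; first by exists [:: sigma].
move=> [t1 [t2 [N E1 E2 G1 G2]]].
have [L1 Q1] := IH _ G1; have [L2 Q2] := IH _ G2.
by exists (L1 ++ L2), t1, t2, L1, L2.
Qed.

Lemma Q_base Z : forall sigma Lf, Q Z sigma Lf -> Lf != [::] /\ forall t, t \in Lf -> prefix sigma t.
Proof.
elim: Z => [|z Z IH] sigma Lf /=; first by move=> ->; split => // t; rewrite inE => /eqP->; exact: prefix_refl.
move=> [t1 [t2 [L1 [L2 [N E1 E2 Q1 [Q2 ->]]]]]].
have [NE1 H1] := IH _ _ Q1; have [NE2 H2] := IH _ _ Q2.
split; first by case: L1 NE1 {H1 Q1}.
move=> t; rewrite mem_cat => /orP[/H1|/H2] P.
- by case: E1 => _ _ P' _; exact: prefix_trans P' P.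
- by case: E2 => _ _ P' _; exact: prefix_trans P' P.
Qed.

Lemma Q_inT Z : forall sigma Lf, sigma \in T -> Q Z sigma Lf -> forall t, t \in Lf -> t \in T.
Proof.
elim: Z => [|z Z IH] sigma Lf /= Hs; first by move=> -> t; rewrite inE => /eqP->.
move=> [t1 [t2 [L1 [L2 [N E1 E2 Q1 [Q2 ->]]]]]] t; rewrite mem_cat => /orP[].
- by have [T1 _ _ _] := E1; exact: IH T1 Q1 t.
- by have [T2 _ _ _] := E2; exact: IH T2 Q2 t.
Qed.

Lemma inS_root Z sigma Lf : Q Z sigma Lf -> inS Lf sigma.
Proof.
move=> /Q_base[NE H]; case: Lf NE H => // t Lf _ H; apply/hasP; exists t; first exact: mem_head.
exact: H (mem_head _ _).
Qed.

Lemma inS_above Z sigma Lf s : Q Z sigma Lf -> inS Lf s -> size sigma <= size s -> prefix sigma s.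
Proof.
move=> /Q_base[_ H] /hasP[t Ht Pst] Hsz; exact: prefix_le (H t Ht) Pst Hsz.
Qed.

Lemma inS_eqsize Z sigma Lf s : Q Z sigma Lf -> inS Lf s -> size s = size sigma -> s = sigma.
Proof.
move=> HQ Hs Hsz; apply/esym/prefix_eqsize; last by [].
by apply: inS_above HQ Hs _; rewrite Hsz.
Qed.

Lemma sep (t1 t2 t : seq bool) : prefix t1 t -> prefix t2 t -> size t1 = size t2 -> t1 != t2 -> False.
Proof. by move=> P1 P2 Hs N; move: N; rewrite (prefix_same P1 P2 Hs) eqxx. Qed.

Lemma nth_ge (z : nat) Z i : sorted ltn (z :: Z) -> i < size (z :: Z) -> z <= nth 0 (z :: Z) i.
Proof. move=> H Hi; exact: (sorted_nth_le H (leq0n i) Hi). Qed.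

Lemma Q_props Z : forall sigma Lf, Q Z sigma Lf -> path ltn (size sigma) Z ->
  [/\ (forall i, i < (size Z).+1 -> exists s, inS Lf s /\ size s = nth 0 (size sigma :: Z) i),
      (forall i, i < size Z -> forall s, inS Lf s -> size s = nth 0 (size sigma :: Z) i ->
         exists a b, [/\ a != b, [/\ inS Lf a, size a = nth 0 Z i & prefix s a],
                         [/\ inS Lf b, size b = nth 0 Z i & prefix s b] &
                         forall t, inS Lf t -> size t = nth 0 Z i -> prefix s t -> t = a \/ t = b])
    & (forall i, i < size Z -> forall s t, inS Lf s -> inS Lf t -> size s = nth 0 (size sigma :: Z) i ->
         size t = nth 0 Z i -> prefix s t ->
         exists zeta, [/\ inS Lf zeta, prefix s zeta, prefix zeta t & C zeta = c])].
Proof.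
elim: Z => [|z Z IH] sigma Lf HQ HP.
  split => //; case=> // _; exists sigma; split => //; exact: inS_root HQ.
have HQ0 := HQ.
move: HQ => [t1 [t2 [L1 [L2 [N E1 E2 Q1 [Q2 EL]]]]]].
have [T1 St1 Pt1 [zeta1 [Zp1 Zs1 Zq1 Zc1]]] := E1.
have [T2 St2 Pt2 [zeta2 [Zp2 Zs2 Zq2 Zc2]]] := E2.
move: HP => /= /andP[Hsz HPz].
have [A1 B1 C1] := IH _ _ Q1 ltac:(by rewrite St1).
have [A2 B2 C2] := IH _ _ Q2 ltac:(by rewrite St2).
rewrite St1 in A1 B1 C1; rewrite St2 in A2 B2 C2.
have HS : sorted ltn (z :: Z) by exact: HPz.
have inL1 s : inS L1 s -> inS Lf s by rewrite EL inS_cat => ->.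
have inL2 s : inS L2 s -> inS Lf s by rewrite EL inS_cat => ->; rewrite orbT.
have R1 := inS_root Q1; have R2 := inS_root Q2.
have N' : t2 != t1 by rewrite eq_sym.
have Hst : size t1 = size t2 by rewrite St1 St2.
split.
- case=> [|i] Hi; first by exists sigma; split => //; apply: inS_down (inL1 _ R1) Pt1.
  have [s [Hs Hss]] := A1 i Hi; exists s; split => //; exact: inL1.
- case=> [|i] Hi s Hs Hss.
  + have -> : s = sigma by apply: inS_eqsize HQ0 Hs Hss.
    exists t1, t2; split => //; [split => //; exact: inL1 | split => //; exact: inL2 |].
    move=> t; rewrite EL inS_cat => /orP[H|H] Ht _.
    * by left; apply: inS_eqsize Q1 H _; rewrite Ht St1.
    * by right; apply: inS_eqsize Q2 H _; rewrite Ht St2.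
  + have Hzs : z <= size s by rewrite Hss /=; apply: nth_ge HS (ltnW Hi).
    move: Hs; rewrite EL inS_cat => /orP[Hs|Hs].
    * have P1 : prefix t1 s by apply: inS_above Q1 Hs _; rewrite St1.
      have [a [b [Nab [Ia Sa Pa] [Ib Sb Pb] U]]] := B1 i Hi s Hs Hss.
      exists a, b; split => //; [split => //; by rewrite inS_cat Ia | split => //; by rewrite inS_cat Ib |].
      move=> t; rewrite inS_cat => /orP[H|H] Ht Pst; first exact: U.
      exfalso; have P2 : prefix t2 t.
        apply: inS_above Q2 H _; rewrite St2; exact: leq_trans Hzs (size_prefix Pst).
      exact: sep (prefix_trans P1 Pst) P2 Hst N.
    * have P2 : prefix t2 s by apply: inS_above Q2 Hs _; rewrite St2.
      have [a [b [Nab [Ia Sa Pa] [Ib Sb Pb] U]]] := B2 i Hi s Hs Hss.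
      exists a, b; split => //; [split => //; by rewrite inS_cat Ia orbT | split => //; by rewrite inS_cat Ib orbT |].
      move=> t; rewrite inS_cat => /orP[H|H] Ht Pst; last exact: U.
      exfalso; have P1 : prefix t1 t.
        apply: inS_above Q1 H _; rewrite St1; exact: leq_trans Hzs (size_prefix Pst).
      exact: sep (prefix_trans P2 Pst) P1 (esym Hst) N'.
- case=> [|i] Hi s t Hs Ht Hss Hts Pst.
  + have Es : s = sigma by apply: inS_eqsize HQ0 Hs Hss.
    subst s; move: Ht; rewrite EL inS_cat => /orP[H|H].
    * have -> : t = t1 by apply: inS_eqsize Q1 H _; rewrite Hts St1.
      exists zeta1; split => //; apply: inS_down _ Zq1; by rewrite inS_cat R1.
    * have -> : t = t2 by apply: inS_eqsize Q2 H _; rewrite Hts St2.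
      exists zeta2; split => //; apply: inS_down _ Zq2; by rewrite inS_cat R2 orbT.
  + have Hzs : z <= size s by rewrite Hss /=; apply: nth_ge HS (ltnW Hi).
    have Hzt : z <= size t by apply: leq_trans Hzs (size_prefix Pst).
    move: Hs Ht; rewrite EL !inS_cat => /orP[Hs|Hs] /orP[Ht|Ht].
    * have [zeta [Iz P1 P2 Cz]] := C1 i Hi s t Hs Ht Hss Hts Pst.
      by exists zeta; split => //; rewrite inS_cat Iz.
    * exfalso; have P1 : prefix t1 s by apply: inS_above Q1 Hs _; rewrite St1.
      have P2 : prefix t2 t by apply: inS_above Q2 Ht _; rewrite St2.
      exact: sep (prefix_trans P1 Pst) P2 Hst N.
    * exfalso; have P2 : prefix t2 s by apply: inS_above Q2 Hs _; rewrite St2.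
      have P1 : prefix t1 t by apply: inS_above Q1 Ht _; rewrite St1.
      exact: sep (prefix_trans P2 Pst) P1 (esym Hst) N'.
    * have [zeta [Iz P1 P2 Cz]] := C2 i Hi s t Hs Ht Hss Hts Pst.
      by exists zeta; split => //; rewrite inS_cat Iz orbT.
Qed.

End Fin.

Definition cl (Lf : seq (seq bool)) : seq (seq bool) :=
  flatten [seq [seq take i t | i <- iota 0 (size t).+1] | t <- Lf].

Lemma mem_cl Lf s : (s \in cl Lf) = inS Lf s.
Proof.
apply/idP/idP.
- move=> /flattenP[l /mapP[t Ht ->] /mapP[i _ ->]].
  apply/hasP; exists t => //; exact: prefix_take.
- move=> /hasP[t Ht Pst]; apply/flattenP.
  exists [seq take i t | i <- iota 0 (size t).+1]; first exact: map_f.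
  apply/mapP; exists (size s).
  + by rewrite mem_iota add0n ltnS size_prefix.
  + by move: Pst; rewrite prefixE => /eqP->.
Qed.

Lemma exts_size2 (S : seq (seq bool)) sigma l a b : a != b ->
  (forall t, t \in S -> size t = l -> prefix sigma t -> t = a \/ t = b) ->
  [/\ a \in S, size a = l & prefix sigma a] -> [/\ b \in S, size b = l & prefix sigma b] ->
  size (exts S sigma l) = 2.
Proof.
move=> Nab U [Ia Sa Pa] [Ib Sb Pb].
have -> : 2 = size [:: a; b] by [].
apply: perm_size; apply: uniq_perm; first exact: undup_uniq.
  by rewrite /= inE Nab.
move=> x; rewrite mem_undup mem_filter !inE.
apply/idP/idP.
- move=> /andP[/andP[/eqP Hs Px] Hx]; have [->|->] := U x Hx Hs Px; by rewrite eqxx ?orbT.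
- by move=> /orP[/eqP->|/eqP->]; rewrite ?Sa ?Sb ?Pa ?Pb ?Ia ?Ib eqxx.
Qed.

Lemma final_props (T : seq (seq bool)) C c Z' rho Lf : rho \in T -> is_tree T ->
  Q T C c Z' rho Lf -> path ltn (size rho) Z' ->
  [/\ is_tree (cl Lf), {subset cl Lf <= T}, quasistrong (size rho :: Z') (cl Lf) &
      prehomogeneous C (size rho :: Z') (cl Lf)].
Proof.
move=> Hr Htr HQ HP.
have [A B D] := Q_props HQ HP.
have Htree : is_tree (cl Lf).
  by move=> s t; rewrite !mem_cl => Ht Pst; exact: inS_down Ht Pst.
split => //.
- move=> s; rewrite mem_cl => /hasP[t Ht Pst]; apply: Htr Pst.
  exact: Q_inT Hr HQ t Ht.
- split => //; split.
  + move=> i Hi; have [s [Hs Hss]] := A i Hi; exists s; by rewrite mem_cl.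
  + move=> i Hi sigma; rewrite mem_cl => Hs Hss.
    have [a [b [Nab [Ia Sa Pa] [Ib Sb Pb] U]]] := B i Hi sigma Hs Hss.
    have H2 : size (exts (cl Lf) sigma (nth 0 (size rho :: Z') i.+1)) = 2.
      apply: exts_size2 Nab _ _ _.
      * move=> t; rewrite mem_cl; exact: U.
      * by rewrite mem_cl.
      * by rewrite mem_cl.
    split => // t1 t2; rewrite !mem_undup !mem_filter => /andP[/andP[/eqP S1 _] _] /andP[/andP[/eqP S2 _] _] N.
    rewrite /compatible; apply/negP => /orP[] P.
    * by move: N; rewrite (prefix_eqsize P) ?eqxx // S1 S2.
    * by move: N; rewrite (prefix_eqsize P) ?eqxx // S1 S2.
- exists c => i Hi sigma tau; rewrite !mem_cl => Hs Hss Ht Hts Pst.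
  have [zeta [Iz P1 P2 Cz]] := D i Hi sigma tau Hs Ht Hss Hts Pst.
  by exists zeta; split => //; rewrite mem_cl.
Qed.

Lemma exts2 (T : seq (seq bool)) s l : size (exts T s l) = 2 ->
  exists a b, [/\ a != b, [/\ a \in T, size a = l & prefix s a] & [/\ b \in T, size b = l & prefix s b]].
Proof.
have Hu := undup_uniq [seq tau <- T | (size tau == l) && prefix s tau].
have Hm x : x \in exts T s l -> [/\ x \in T, size x = l & prefix s x].
  by rewrite mem_undup mem_filter => /andP[/andP[/eqP -> ->] ->].
rewrite /exts in Hm *.
case E: (undup _) Hu Hm => [|a [|b [|]]] // Hu Hm _.
exists a, b; split.
- by move: Hu; rewrite /= inE andbT.
- by apply: Hm; rewrite mem_head.
- by apply: Hm; rewrite !inE eqxx orbT.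
Qed.

Lemma qs_Spl X (T : seq (seq bool)) : sorted ltn X -> quasistrong X T -> Spl T X.
Proof.
move=> HX [Htr [Hlev Hspl]].
have chain : forall i sigma, sigma \in T -> size sigma = nth 0 X i -> forall j, i <= j -> j < size X ->
    exists tau, [/\ tau \in T, prefix sigma tau & size tau = nth 0 X j].
  move=> i sigma Hs Hss; elim=> [|j IH] Hij Hj.
    by move: Hij Hss; rewrite leqn0 => /eqP -> Hss; exists sigma; split => //; exact: prefix_refl.
  move: Hij; rewrite leq_eqVlt => /orP[/eqP <-|Hij].
    by exists sigma; split => //; exact: prefix_refl.
  have [tau [T1 P1 S1]] := IH Hij (ltnW Hj).
  have [H2 _] := Hspl j Hj tau T1 S1.
  have [a [_ [_ [Ia Sa Pa] _]]] := exts2 H2.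
  by exists a; split => //; exact: prefix_trans Pa.
move=> l1 l2 H1 H2 Hlt sigma Hs Hss.
have Hi := H1; rewrite -index_mem in Hi.
have Hj := H2; rewrite -index_mem in Hj.
set i := index l1 X in Hi; set j := index l2 X in Hj.
have E1 : nth 0 X i = l1 by exact: nth_index.
have E2 : nth 0 X j = l2 by exact: nth_index.
have Hij : i < j.
  rewrite ltnNge; apply/negP => Hji.
  by move: (sorted_nth_le HX Hji Hi); rewrite E1 E2 leqNgt Hlt.
have Hi1 : i.+1 < size X by exact: leq_ltn_trans Hij Hj.
have [Hsz _] := Hspl i Hi1 sigma Hs (etrans Hss (esym E1)).
have [a [b [Nab [Ia Sa Pa] [Ib Sb Pb]]]] := exts2 Hsz.
have [a' [Ia' Pa' Sa']] := chain _ _ Ia Sa j Hij Hj.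
have [b' [Ib' Pb' Sb']] := chain _ _ Ib Sb j Hij Hj.
exists a', b'; split => //.
- exact: prefix_trans Pa Pa'.
- exact: prefix_trans Pb Pb'.
- split; [by rewrite Sa' | by rewrite Sb' |].
  by apply: ext_neq Pa' Pb' _ Nab; rewrite Sa Sb.
Qed.

Fixpoint allseq m : seq (seq bool) :=
  if m is m'.+1 then [seq false :: s | s <- allseq m'] ++ [seq true :: s | s <- allseq m']
  else [:: [::]].

Lemma size_allseq m : size (allseq m) = 2 ^ m.
Proof. by elim: m => //= m IH; rewrite size_cat !size_map IH expnS mul2n addnn. Qed.

Lemma allseq_complete m s : size s = m -> s \in allseq m.
Proof.
elim: m s => [|m IH] [|b s] //= [Hs]; rewrite mem_cat.
by case: b; apply/orP; [right|left]; apply: map_f; apply: IH.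
Qed.

Lemma allseq_size m s : s \in allseq m -> size s = m.
Proof.
elim: m s => [|m IH] s /=; first by rewrite inE => /eqP->.
by rewrite mem_cat => /orP[] /mapP[t Ht ->] /=; rewrite (IH _ Ht).
Qed.
Unset Implicit Arguments.

Theorem lemma2p17 :
  exists hbar : nat -> nat -> nat -> nat,
    primitive_recursive3 hbar /\
    forall (n k : nat) (X : seq nat) (T : seq bool -> seq (seq bool))
           (C : seq bool -> nat),
      1 <= n ->
      finset_nat X -> X != [::] ->
      hbar (head 0 X) n k <= size X ->
      (forall rho, size rho = head 0 X ->
         quasistrong X (T rho) /\ (forall s, s \in T rho -> compatible s rho)) ->
      (forall rho s, size rho = head 0 X -> s \in T rho -> C s < k) ->
      exists (Z : seq nat) (S : seq bool -> seq (seq bool)),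
        [/\ finset_nat Z, {subset Z <= X}, size Z = n,
            head 0 Z = head 0 X &
            forall rho, size rho = head 0 X ->
              [/\ is_tree (S rho), {subset S rho <= T rho},
                  quasistrong Z (S rho) & prehomogeneous C Z (S rho)]].
Proof.
exists hbar; split; first exact: PR_hbar.
move=> n k X T C Hn HX HXne Hh HT HC.
have Hpos : 0 < size X by case: X HXne {HX Hh HT HC}.
have Hx0 : head 0 X \in X by case: X HXne {HX Hh HT HC Hpos} => //= a X' _; exact: mem_head.
have Hn0 : nth 0 X 0 = head 0 X by case: X HXne {HX Hh HT HC Hpos Hx0}.
set x0 := head 0 X in Hh HT HC Hx0 Hn0 *.
have Hrho : forall rho, rho \in allseq x0 -> [/\ rho \in T rho, size rho = head 0 X, Spl (T rho) X,
       is_tree (T rho) & forall s, s \in T rho -> C s < k].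
  move=> rho Hr; have Hs := allseq_size Hr.
  have [Hq Hc] := HT rho Hs.
  split => //.
  - have [_ [Hlev _]] := Hq; have [s [Hs1 Hs2]] := Hlev 0 Hpos.
    have Hs2' : size s = size rho by rewrite Hs2 Hs Hn0.
    have := Hc s Hs1; rewrite /compatible => /orP[] P.
    + by rewrite (prefix_eqsize P Hs2') in Hs1.
    + by rewrite -(prefix_eqsize P (esym Hs2')) in Hs1.
  - exact: qs_Spl HX Hq.
  - by case: Hq.
  - by move=> s; apply: HC.
have Hg : Gfun (size (allseq x0)) (n.-1).+1 k <= size X by rewrite size_allseq prednK.
have [Z' [P S E G]] := multi HX Hpos Hg Hrho.
have Hex : forall rho, exists Sr : seq (seq bool), size rho = x0 ->
   [/\ is_tree Sr, {subset Sr <= T rho}, quasistrong (x0 :: Z') Sr & prehomogeneous C (x0 :: Z') Sr].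
  move=> rho; case: (eqVneq (size rho) x0) => Hs; last by exists [::] => Ers; move: Hs; rewrite Ers eqxx.
  have [c Gc] := G rho (allseq_complete Hs).
  have [Lf HQ] := Good_Q Gc.
  have [A1 _ _ _ _] := Hrho rho (allseq_complete Hs).
  have [_ _ _ A4 _] := Hrho rho (allseq_complete Hs).
  exists (cl Lf) => _; rewrite -Hs; apply: final_props HQ _ => //; by rewrite Hs.
exists (x0 :: Z'), (fun rho => proj1_sig (constructive_indefinite_description _ (Hex rho))); split => //.
- by move=> x; rewrite inE => /orP[/eqP->//|/S].
- by rewrite /= E prednK.
- by move=> rho Hs; exact: (proj2_sig (constructive_indefinite_description _ (Hex rho))) Hs.
Qed.
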